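(* Let $d_n(a,b,x)$ be defined by $d_1=1$ and $d_n=d_{n-1}x+\sum_{k=2}^{n-1}d_{n-k}\,a\,d_k\,b$ for $n\ge2$, where $a,b,x$ are non-commuting indeterminates. Consider lattice walks in $\mathbb{Z}^2$ using horizontal steps $(i,j)\to(i+1,j)$ (weight $a$), vertical steps $(i,j)\to(i,j+1)$ (weight $b$) and diagonal steps $(i,j)\to(i+1,j+1)$ (weight $x$), where the weight of a walk is the non-commutative product of the weights of its steps in order. Then: (i) $d_n(a,b,x)$ equals the sum of the weights of all such walks from $(0,0)$ to $(n-1,n-1)$ that stay in the region $i\ge j$ and never contain a horizontal step immediately followed by a vertical step; (ii) $a\,d_n(a,b,x)\,b$ equals the sum of the weights of all such walks (with the same step restriction) from $(0,0)$ to $(n,n)$ that, apart from their two endpoints, stay strictly in the region $i>j$; (iii) consequently $d_n(a,b,x)$ is a sum of distinct monomials, each with coefficient $1$, and the number of these monomials is the Catalan number $C_{n-1}=\frac{1}{n}\binom{2n-2}{n-1}$. *)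

(* Defs.v *)
(* Non-commutative polynomials with natural-number
   coefficients in the letters a, b, x are modelled as finite multisets
   of words, i.e. as lists of words up to permutation (perm_eq);
   the coefficient of a word w in p is count_mem w p. *)
From HB Require Import structures.
From mathcomp Require Import all_boot.
Set Implicit Arguments. Unset Strict Implicit. Unset Printing Implicit Defensive.

(* The three letters / step types: La = horizontal step (weight a),
   Lb = vertical step (weight b), Lx = diagonal step (weight x). *)
Inductive letter := La | Lb | Lx.

Definition letter_eqb (u v : letter) : bool :=
  match u, v with
  | La, La | Lb, Lb | Lx, Lx => true
  | _, _ => false
  end.

Lemma letter_eqP : Equality.axiom letter_eqb.
Proof. by case; case; constructor. Qed.

HB.instance Definition _ := hasDecEq.Build letter letter_eqP.

Definition word := seq letter.

Definition ncpoly := seq word.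

Definition mono (w : word) : ncpoly := [:: w].

Definition padd (p q : ncpoly) : ncpoly := p ++ q.
Definition pmul (p q : ncpoly) : ncpoly := [seq u ++ v | u <- p, v <- q].

Definition coef (p : ncpoly) (w : word) : nat := count_mem w p.

Definition peq (p q : ncpoly) : Prop := forall w, coef p w = coef q w.

Definition nmonos (p : ncpoly) : nat := size (undup p).

(* Lattice walks: a walk from (0,0) is its sequence of steps; its weight is
   the word of the weights of the steps, which is the same sequence. *)
Definition step (l : letter) : nat * nat :=
  match l with La => (1, 0) | Lb => (0, 1) | Lx => (1, 1) end.

Definition pos (w : word) : nat * nat :=
  foldr (fun l p => ((step l).1 + p.1, (step l).2 + p.2)) (0, 0) w.

Definition no_ab (w : word) : bool := ~~ infix [:: La; Lb] w.

Definition walk_i (n : nat) (w : word) : bool :=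
  [&& pos w == (n.-1, n.-1),
      all (fun k => (pos (take k w)).2 <= (pos (take k w)).1) (iota 0 (size w).+1)
    & no_ab w].

Definition walk_ii (n : nat) (w : word) : bool :=
  [&& pos w == (n, n),
      all (fun k => (pos (take k w)).2 < (pos (take k w)).1) (iota 1 (size w).-1)
    & no_ab w].

(* Sum of the weights of the walks w satisfying P, as a polynomial given by its
   coefficients: each walk contributes its weight with coefficient 1 and
   distinct walks have distinct step sequences, so the coefficient of w is
   1 if w is such a walk, 0 otherwise. *)
Definition walksum_coef (P : word -> bool) (w : word) : nat := P w.

Definition d_rec (d : nat -> ncpoly) (n : nat) : ncpoly :=
  padd (pmul (d n.-1) (mono [:: Lx]))
       (flatten [seq pmul (pmul (pmul (d (n - k)) (mono [:: La])) (d k)) (mono [:: Lb])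
                | k <- iota 2 (n - 2)]).

(* Main.v *)
Require Import Defs.
From HB Require Import structures.
From mathcomp Require Import all_boot.
From mathcomp Require Import zify.
Set Implicit Arguments. Unset Strict Implicit. Unset Printing Implicit Defensive.

Notation A w := (pos w).1.
Notation B w := (pos w).2.


Lemma posA_cat u v : A (u ++ v) = A u + A v.
Proof. by elim: u => [|l u IH] //=; rewrite IH addnA. Qed.
Lemma posB_cat u v : B (u ++ v) = B u + B v.
Proof. by elim: u => [|l u IH] //=; rewrite IH addnA. Qed.
Lemma posA_rcons u l : A (rcons u l) = A u + (step l).1.
Proof. by rewrite -cats1 posA_cat /= addn0. Qed.
Lemma posB_rcons u l : B (rcons u l) = B u + (step l).2.
Proof. by rewrite -cats1 posB_cat /= addn0. Qed.

Lemma size_AB w : size w <= A w + B w.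
Proof. elim: w => [|[] w IH] //=; lia. Qed.

Lemma no_ab_nil : no_ab [::].
Proof. by []. Qed.

Lemma no_ab_cons l t : no_ab (l :: t) = ~~ ((l == La) && (head Lx t == Lb)) && no_ab t.
Proof.
rewrite /no_ab infix_consl negb_or; congr (_ && _).
by case: l; case: t => [|[] t] /=; rewrite ?andbT //; case: t.
Qed.

Lemma no_ab_cat u v : no_ab (u ++ v) =
  [&& no_ab u, no_ab v & ~~ ((last Lx u == La) && (head Lx v == Lb))].
Proof.
elim: u => [|l u IH]; first by rewrite /= andbT.
rewrite cat_cons no_ab_cons IH no_ab_cons.
case: u IH => [|l' u] IH /=.
  by rewrite no_ab_nil; case: l; case: (head Lx v) ; case: (no_ab v).
by rewrite !andbA.
Qed.

Definition okb (w : word) : bool :=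
  all (fun k => (pos (take k w)).2 <= (pos (take k w)).1) (iota 0 (size w).+1).

Lemma okP w : reflect (forall k, B (take k w) <= A (take k w)) (okb w).
Proof.
apply: (iffP allP) => H k.
  case: (leqP k (size w)) => hk.
    by apply: H; rewrite mem_iota; lia.
  rewrite take_oversize; last by lia.
  by have := H (size w); rewrite take_size; apply; rewrite mem_iota; lia.
by move=> _; apply: H.
Qed.

Lemma ok_cat u v : okb (u ++ v) =
  okb u && [forall k : 'I_(size v).+1, B u + B (take k v) <= A u + A (take k v)].
Proof.
apply/okP/andP => [H|[/okP H1 /forallP H2] k].
  split.
    apply/okP => k; case: (leqP k (size u)) => hk.
      by have := H k; rewrite takel_cat.
    rewrite take_oversize; last by lia.
    by have := H (size u); rewrite takel_cat // take_size.
  apply/forallP => k; have := H (size u + k).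
  by rewrite take_cat ltnNge leq_addr /= addKn posA_cat posB_cat.
rewrite take_cat; case: ifP => hk; first exact: H1.
rewrite posA_cat posB_cat.
case: (leqP (k - size u) (size v)) => hk2.
  by have := H2 (Ordinal (n:=(size v).+1) (m:=k - size u) (ltnSE _)); apply; lia.
rewrite take_oversize; last by lia.
by have := H2 (Ordinal (n:=(size v).+1) (m:=size v) (ltnSn _)); rewrite /= take_size.
Qed.

Lemma pmul_mono_r p y : pmul p (mono y) = map (cat^~ y) p.
Proof. by elim: p => //= u p IH; rewrite -IH. Qed.
Lemma pmul_mono_l y q : pmul (mono y) q = map (cat y) q.
Proof. by rewrite /pmul /= cats0. Qed.

Lemma count_rcons_map (p : ncpoly) (w : word) (z y : letter) :
  count_mem (rcons w z) (map (cat^~ [:: y]) p) = (z == y) * count_mem w p.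
Proof.
elim: p => [|u p IH] /=; first by rewrite muln0.
by rewrite IH cats1 eqseq_rcons mulnDr [y == z]eq_sym; case: (z == y); case: (u == w).
Qed.

Lemma count_nil_map_r (p : ncpoly) (y : letter) : count_mem [::] (map (cat^~ [:: y]) p) = 0.
Proof. by elim: p => //= u p ->; case: u. Qed.

Lemma count_cons_map (p : ncpoly) (l : letter) (w : word) (y : letter) :
  count_mem (l :: w) (map (cat [:: y]) p) = (l == y) * count_mem w p.
Proof.
elim: p => [|u p IH] /=; first by rewrite muln0.
by rewrite IH mulnDr eqseq_cons [y == l]eq_sym; case: (l == y); case: (u == w).
Qed.

Lemma count_nil_map_l (p : ncpoly) (y : letter) : count_mem [::] (map (cat [:: y]) p) = 0.
Proof. by elim: p. Qed.

Lemma count_map_cat (u : word) (q : ncpoly) (w : word) :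
  count_mem w (map (cat u) q) = (take (size u) w == u) * count_mem (drop (size u) w) q.
Proof.
rewrite count_map; case: eqP => [e|ne].
  rewrite mul1n; apply: eq_count => v /=.
  rewrite -{1}(cat_take_drop (size u) w) e; apply/eqP/eqP => [/eqP|->] //.
  by rewrite eqseq_cat // eqxx /= => /eqP.
rewrite mul0n; apply/eqP; rewrite -leqn0 leqNgt -has_count; apply/hasP => [[v _ /= /eqP ev]].
by apply: ne; rewrite -ev take_size_cat.
Qed.

Lemma sum_take_eq (w u : word) (F : nat -> nat) :
  \sum_(i < (size w).+1) (take i w == u) * F i = (take (size u) w == u) * F (size u).
Proof.
case: (leqP (size u) (size w)) => hs.
  rewrite (bigD1 (Ordinal (n:=(size w).+1) (m:=size u) (ltnSE hs))) //= big1 ?addn0 //.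
  move=> [i hi] /eqP ni; case: eqP => // e; exfalso; apply: ni; apply: val_inj => /=.
  by rewrite -e size_takel //; lia.
rewrite big1.
  case: eqP => // e; move: hs; rewrite -e size_take; case: ifP; lia.
move=> [i hi] _; case: eqP => // e; exfalso.
by move: hs; rewrite -e size_takel /=; lia.
Qed.

Lemma count_pmul (w : word) (p q : ncpoly) :
  count_mem w (pmul p q) = \sum_(i < (size w).+1) count_mem (take i w) p * count_mem (drop i w) q.
Proof.
elim: p => [|u p IH]; first by rewrite big1 // => i _; rewrite mul0n.
rewrite /pmul /= count_cat -/(pmul p q) IH.
rewrite [in RHS](eq_bigr (fun i : 'I_ _ => (take i w == u) * count_mem (drop i w) q
     + count_mem (take i w) p * count_mem (drop i w) q)); last first.
  by move=> i _ /=; rewrite mulnDl eq_sym.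
rewrite big_split /=; congr (_ + _).
rewrite count_map_cat (sum_take_eq w u (fun i => count_mem (drop i w) q)) //.
Qed.

Lemma count_pmul_aq (w : word) (p q : ncpoly) :
  count_mem w (pmul (pmul p (mono [:: La])) q) =
  \sum_(j < size w) (nth Lx w j == La) * count_mem (take j w) p * count_mem (drop j.+1 w) q.
Proof.
rewrite count_pmul big_ord_recl /= pmul_mono_r take0 count_nil_map_r mul0n add0n.
apply: eq_bigr => [[j hj]] _ /=.
by rewrite /bump /= add1n (take_nth Lx hj) count_rcons_map.
Qed.

Lemma count_rcons_pmul_b (w : word) (z : letter) (X : ncpoly) :
  count_mem (rcons w z) (pmul X (mono [:: Lb])) = (z == Lb) * count_mem w X.
Proof. by rewrite pmul_mono_r count_rcons_map. Qed.


Definition W (w : word) : bool := [&& A w == B w, okb w & no_ab w].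

Lemma walk_iE n w : walk_i n w = W w && (A w == n.-1).
Proof.
rewrite /walk_i -/(okb w) /W; case: (pos w) => x y /=.
rewrite xpair_eqE; case: (okb w); case: (no_ab w); rewrite ?andbF ?andbT //=.
all: case: (x =P n.-1) => [->|nx]; case: (y =P n.-1) => [->|ny]; rewrite ?eqxx ?andbF ?andbT //=.
by case: eqP => // e; case: ny.
Qed.

Lemma ok_catP u v : reflect (okb u /\ forall k, B u + B (take k v) <= A u + A (take k v))
  (okb (u ++ v)).
Proof.
rewrite ok_cat; apply: (iffP andP) => [[h /forallP H]|[h H]]; split => //.
  move=> k; case: (leqP k (size v)) => hk; first by apply: (H (Ordinal (n:=(size v).+1) (m:=k) (ltnSE hk))).
  rewrite take_oversize; last by lia.
  by have := H (Ordinal (n:=(size v).+1) (m:=size v) (ltnSn _)); rewrite /= take_size.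
by apply/forallP => k; apply: H.
Qed.

Lemma ok_rcons w l : okb (rcons w l) = okb w && (B w + (step l).2 <= A w + (step l).1).
Proof.
rewrite -cats1; apply/ok_catP/andP => [[h H]|[h H]]; split => //.
  by have := H 1; rewrite /= !addn0.
case=> [|k] /=; rewrite ?addn0 //.
by move/okP: h => /(_ (size w)); rewrite take_size.
Qed.

Lemma ok_end v : okb v -> B v <= A v.
Proof. by move/okP => /(_ (size v)); rewrite take_size. Qed.

Lemma ok_head v : okb v -> head Lx v != Lb.
Proof. by case: v => [|l v] // /okP /(_ 1); rewrite /= take0 /=; case: l. Qed.

Lemma ok_last v : okb v -> A v = B v -> last Lx v != La.
Proof.
case/lastP: v => [|v l] //; rewrite last_rcons ok_rcons posA_rcons posB_rcons.
case/andP=> h _; have := ok_end h; by case: l => //=; lia.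
Qed.

Lemma W_rcons_a w : W (rcons w La) = false.
Proof.
rewrite /W ok_rcons posA_rcons posB_rcons /=.
case: eqP => //= e; case h: (okb w) => //=; have := ok_end h; lia.
Qed.

Lemma W_rcons_x w : W (rcons w Lx) = W w.
Proof.
rewrite /W ok_rcons posA_rcons posB_rcons /= -cats1 no_ab_cat /=.
have -> : (Lx == Lb) = false by [].
rewrite eqn_add2r leq_add2r andbF /= andbT.
case: eqP => //= e; case h: (okb w) => //=; have := ok_end h; lia.
Qed.

Lemma sum01 n (F : 'I_n -> bool) : (forall i j, F i -> F j -> i = j) ->
  \sum_(i < n) F i = [exists i, F i].
Proof.
move=> U; case: existsP => [[i Fi]|nF].
  rewrite (bigD1 i) // big1 ?Fi // => j /= nj.
  by case: (boolP (F j)) => // Fj; case/eqP: nj; apply: U.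
by rewrite big1 // => j _; case: (boolP (F j)) => // Fj; case: nF; exists j.
Qed.

Lemma split_at (w : word) j : j < size w -> w = take j w ++ nth Lx w j :: drop j.+1 w.
Proof. by move=> hj; rewrite -(drop_nth Lx hj) cat_take_drop. Qed.

Lemma pos_cons_A l t : A (l :: t) = (step l).1 + A t. Proof. by []. Qed.
Lemma pos_cons_B l t : B (l :: t) = (step l).2 + B t. Proof. by []. Qed.

Lemma no_ab_wrap V : V != [::] ->
  no_ab (La :: rcons V Lb) = [&& no_ab V, head Lx V != Lb & last Lx V != La].
Proof.
case: V => [|v0 V] // _; rewrite no_ab_cons /= -rcons_cons -cats1 no_ab_cat /=.
have -> : (Lb == Lb) = true by [].
by case: (v0 == Lb); case: (no_ab _); case: (_ == La).
Qed.

Lemma W_nonempty V : 0 < A V -> V != [::].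
Proof. by case: V. Qed.

Lemma no_ab_wrapW V : 0 < A V -> W V -> no_ab (La :: rcons V Lb).
Proof.
move=> hA /and3P [/eqP hb hok hab]; rewrite no_ab_wrap ?W_nonempty // hab ok_head //.
by rewrite ok_last.
Qed.

Lemma ok_wrap U V : W U -> okb V -> A V = B V -> okb (U ++ La :: rcons V Lb).
Proof.
move=> /and3P [/eqP hU okU _] okV hV; apply/ok_catP; split => // -[|k].
  by rewrite /=; lia.
rewrite /= -cats1 take_cat; case: ifP => hk.
  by move/okP: okV => /(_ k); lia.
rewrite posA_cat posB_cat; case: (k - size V) => [|m] /=; lia.
Qed.

Lemma term_sound w j : j < size w -> nth Lx w j == La -> W (take j w) ->
  W (drop j.+1 w) -> 0 < A (drop j.+1 w) -> W (rcons w Lb).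
Proof.
move=> hj ha hU hV hA; rewrite (split_at hj) (eqP ha) rcons_cat rcons_cons.
move: (hU) (hV) => /and3P [/eqP eU okU abU] /and3P [/eqP eV okV abV].
rewrite /W ok_wrap // no_ab_cat abU no_ab_wrapW //=.
have -> : (La == Lb) = false by []. rewrite andbF andbT posA_cat posB_cat /= posA_rcons posB_rcons /=.
by apply/eqP; lia.
Qed.

Lemma term_after w j k : j < size w -> nth Lx w j == La -> W (take j w) ->
  okb (drop j.+1 w) -> j < k -> k <= size w -> B (take k w) < A (take k w).
Proof.
move=> hj ha hU hV hjk hk.
have hs : size (take j w) = j by rewrite size_takel // ltnW.
have e := split_at hj; rewrite (eqP ha) in e.
move: (take j w) (drop j.+1 w) e hU hV hs => U V e /and3P [/eqP eU _ _] okV hs.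
rewrite e take_cat hs (_ : (k < j) = false); last by apply/negbTE; rewrite -leqNgt ltnW.
have -> : k - j = (k - j - 1).+1 by lia.
rewrite /= posA_cat posB_cat /=.
by move/okP: okV => /(_ (k - j - 1)); lia.
Qed.

Lemma term_exists w : W (rcons w Lb) -> exists j : 'I_(size w),
  [&& nth Lx w j == La, W (take j w), W (drop j.+1 w) & 0 < A (drop j.+1 w)].
Proof.
case/and3P; rewrite ok_rcons posA_rcons posB_rcons /= addn0 -cats1 no_ab_cat /=.
move=> /eqP hbal /andP [okw _] /andP [abw hlast].
have hlast' : last Lx w != La.
  by move: hlast; have -> : (Lb == Lb) = true by []; rewrite andbT.
pose P j := (j <= size w) && (A (take j w) == B (take j w)).
have exP : exists j, P j by exists 0; rewrite /P take0.
have ubP : forall i, P i -> i <= size w by move=> i /andP [].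
case: (ex_maxnP exP ubP) => j /andP [hjs /eqP hb] hmax.
have hj : j < size w.
  rewrite ltn_neqAle hjs andbT; apply/eqP => ej; move: hb; rewrite ej take_size; lia.
have fact : forall k, j < k -> k <= size w -> B (take k w) < A (take k w).
  move=> k hjk hk; rewrite ltn_neqAle; move/okP: okw => /(_ k) ->; rewrite andbT.
  apply/negP => /eqP ek; have := hmax k; rewrite /P hk ek eqxx /=; move=> /(_ isT); lia.
have hl : nth Lx w j = La.
  have := fact j.+1 (ltnSn _) hj; rewrite (take_nth Lx hj) posA_rcons posB_rcons hb.
  by case: (nth Lx w j) => //=; lia.
have e := split_at hj; rewrite hl in e.
have okU : okb (take j w).
  by move: okw; rewrite -{1}(cat_take_drop j w) => /ok_catP [].
have abU : no_ab (take j w) /\ no_ab (drop j.+1 w).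
  move: abw; rewrite {1}e no_ab_cat no_ab_cons; by case/and3P => -> /andP [_ ->].
have hpA : A w = A (take j w) + 1 + A (drop j.+1 w) by rewrite {1}e posA_cat /=; lia.
have hpB : B w = B (take j w) + B (drop j.+1 w) by rewrite {1}e posB_cat /=.
have hsV : size (drop j.+1 w) = size w - j.+1 by rewrite size_drop.
have okV : okb (drop j.+1 w).
  apply/okP => k; case: (ltnP k (size (drop j.+1 w))) => hk.
    have h1 : j.+1 + k <= size w by lia.
    have := fact (j.+1 + k) (ltn_addr _ (ltnSn _)) h1.
    rewrite takeD (take_nth Lx hj) hl -cats1 !posA_cat !posB_cat /=; lia.
  rewrite take_oversize //; lia.
have VnE : drop j.+1 w != [::].
  apply/negP => /eqP eV; move: hlast'; rewrite {1}e eV last_cat /=; by [].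
exists (Ordinal hj); rewrite /= hl /W okU okV hb eqxx.
case: abU => -> ->; rewrite !andbT /=.
have := size_AB (drop j.+1 w); move: VnE; case: (drop j.+1 w) hpA hpB => [|l V] //= hpA hpB _ hsz.
apply/andP; split; first (apply/eqP; lia).
lia.
Qed.

Lemma L3 w : nat_of_bool (W (rcons w Lb)) = \sum_(j < size w)
  nat_of_bool [&& nth Lx w j == La, W (take j w), W (drop j.+1 w) & 0 < A (drop j.+1 w)].
Proof.
rewrite sum01.
  congr nat_of_bool; apply/idP/existsP => [/term_exists //|[j /and4P [h1 h2 h3 h4]]].
  exact: term_sound h1 h2 h3 h4.
have key : forall i j : 'I_(size w), i < j ->
    [&& nth Lx w i == La, W (take i w), W (drop i.+1 w) & 0 < A (drop i.+1 w)] ->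
    [&& nth Lx w j == La, W (take j w), W (drop j.+1 w) & 0 < A (drop j.+1 w)] -> False.
  move=> i j hij /and4P [a1 a2 /and3P [_ a3 _] _] /and4P [_ /and3P [/eqP b2 _ _] _ _].
  have := term_after (ltn_ord i) a1 a2 a3 hij (ltnW (ltn_ord j)); lia.
move=> i j hi hj; case: (ltngtP i j) => h.
- by case: (key _ _ h hi hj).
- by case: (key _ _ h hj hi).
- exact: val_inj.
Qed.


Lemma sum_eq_c (s : seq nat) c X : \sum_(k <- s) ((k == c) * X) = count_mem c s * X.
Proof.
elim: s => [|k s IH]; first by rewrite big_nil.
by rewrite big_cons IH /= mulnDl eq_sym.
Qed.

Lemma sum_k (n a b : nat) : 2 <= n ->
  \sum_(k <- iota 2 (n - 2)) ((a == (n - k).-1) * (b == k.-1)) = (a + b + 2 == n) && (0 < b).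
Proof.
move=> hn.
rewrite (eq_big_seq (fun k => (k == b.+1) * (a + b + 2 == n))); last first.
  move=> k; rewrite mem_iota => /andP [h1 h2].
  by do 4 (case: eqP => ?) => //=; lia.
rewrite sum_eq_c count_uniq_mem ?iota_uniq // mem_iota.
by case: (_ =P n) => [e|ne]; case: (ltnP 0 b) => hb //=; rewrite ?muln0 ?muln1; lia.
Qed.

Lemma W_nil : W [::]. Proof. by []. Qed.

Lemma A0_nil w : W w -> A w = 0 -> w = [::].
Proof.
case/and3P => /eqP e _ _ h; have := size_AB w; rewrite -e h; case: w e h => // l w; lia.
Qed.

Lemma main_i (d : nat -> ncpoly) (d1 : peq (d 1) (mono [::]))
  (drec : forall n, 2 <= n -> peq (d n) (d_rec d n)) :
  forall n, 1 <= n -> forall w, coef (d n) w = W w && (A w == n.-1).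
Proof.
elim/ltn_ind => n IH0 hn w.
have IH : forall m, m < n -> 0 < m -> forall w, count_mem w (d m) = W w && (A w == m.-1) := IH0.
case: (ltngtP n 1) => [|h|e]; first by lia.
  rewrite drec // /d_rec /coef /padd count_cat pmul_mono_r count_flatten.
  case/lastP: w => [|w z].
    rewrite count_nil_map_r add0n sumnE !big_map big1_seq /=; first by case: n IH IH0 hn h => [|[]].
    by move=> k _; rewrite pmul_mono_r count_nil_map_r.
  rewrite count_rcons_map sumnE !big_map.
  rewrite (eq_big_seq (fun k => (z == Lb) * \sum_(j < size w) (nth Lx w j == La) *
     (W (take j w) && (A (take j w) == (n-k).-1)) *
     (W (drop j.+1 w) && (A (drop j.+1 w) == k.-1)))); last first.
    move=> k; rewrite mem_iota => hk; rewrite count_rcons_pmul_b count_pmul_aq.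
    by congr (_ * _); apply: eq_bigr => j _; rewrite !IH //; lia.
  rewrite IH; [|lia|lia].
  case: z.
  - rewrite W_rcons_a /= mul0n add0n big1 // => k _; by rewrite mul0n.
  - have -> : (Lb == Lx) = false by [].
    have -> : (Lb == Lb) = true by [].
    rewrite mul0n add0n.
    under eq_bigr do rewrite mul1n.
    rewrite exchange_big /=.
    rewrite (eq_bigr (fun j : 'I_(size w) => [&& nth Lx w j == La, W (take j w),
        W (drop j.+1 w) & 0 < A (drop j.+1 w)] * (A w == n.-1))).
      rewrite -big_distrl /= -L3 posA_rcons /= addn0.
      by case: (W _); case: (_ == _).
    move=> j _.
    rewrite (eq_bigr (fun k => ((nth Lx w j == La) && W (take j w) && W (drop j.+1 w)) *
       ((A (take j w) == (n-k).-1) * (A (drop j.+1 w) == k.-1)))); last first.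
      move=> k _; case: (_ == La); case: (W (take j w)); case: (W (drop j.+1 w));
        by rewrite /= ?mul0n ?muln0 ?mul1n ?muln1.
    rewrite -big_distrr /= sum_k //.
    case hX: (nth Lx w j == La) => //=.
    have e := split_at (ltn_ord j); rewrite (eqP hX) in e.
    have hA : A w = A (take j w) + 1 + A (drop j.+1 w) by rewrite {1}e posA_cat /=; lia.
    case: (W (take j w)); case: (W (drop j.+1 w)) => //=.
    by do 2 (case: eqP => ?) => //=; rewrite ?andbF ?andbT ?muln0 ?muln1; try lia;
       case: ltnP => //= ?; lia.
  - rewrite W_rcons_x /= big1 ?addn0.
      rewrite posA_rcons /= mul1n; case: (W w) => //=.
      by do 2 (case: eqP => ?) => //=; lia.
    by move=> k _; rewrite mul0n.
subst n; rewrite d1 /coef /mono /=.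
case: (boolP (W w)) => hw /=; last first.
  by case: eqP => // e; move: hw; rewrite -e W_nil.
rewrite addn0; case: (w =P [::]) => [->|nw] //=.
have -> : ([::] == w) = false by apply/eqP => e; case: nw.
by case: eqP => // e; case: nw; apply: A0_nil.
Qed.


Lemma strict_eq l v z :
  all (fun k => B (take k (l :: rcons v z)) < A (take k (l :: rcons v z)))
      (iota 1 (size (l :: rcons v z)).-1) =
  all (fun m => (step l).2 + B (take m v) < (step l).1 + A (take m v)) (iota 0 (size v).+1).
Proof.
rewrite /= size_rcons -(addn0 1) iotaDl all_map; apply: eq_in_all => m.
rewrite mem_iota /= => hm.
by rewrite -cats1 takel_cat //; lia.
Qed.

Lemma walk_ii_eq n l v z : 2 <= n ->
  walk_ii n (l :: rcons v z) = [&& z == Lb, l == La, W v & A v == n.-1].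
Proof.
move=> hn; rewrite /walk_ii strict_eq.
case: l; last 2 first.
- by rewrite /= take0 /= !andbF.
- by rewrite /= take0 /= !andbF.
rewrite (eq_all (a2 := fun k => B (take k v) <= A (take k v))); last first.
  by move=> m /=; rewrite add0n add1n ltnS.
rewrite -/(okb v) -cats1 no_ab_cons no_ab_cat /= posA_cat posB_cat /= xpair_eqE.
rewrite /W; case: (boolP (okb v)) => hok; last by rewrite !andbF.
have hle := ok_end hok.
case: z => /=.
- rewrite !andbF; apply/negbTE; apply/negP => /andP [/eqP ? /eqP ?]; lia.
- have E : ((1 + (A v + (0 + 0)) == n) && (0 + (B v + (1 + 0)) == n)) =
      (A v == B v) && (A v == n.-1).
    by apply/andP/andP => [[/eqP ? /eqP ?]|[/eqP ? /eqP ?]]; split; apply/eqP; lia.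
  rewrite E; have -> : (Lb == Lb) = true by [].
  case: (A v =P B v) => hAB /=; last by rewrite ?andbF.
  case: (A v =P n.-1) => hA /=; last by rewrite ?andbF.
  have hne : v != [::] by clear E; case: v hok hle hA hAB => //=; lia.
  rewrite (_ : head Lx (v ++ [:: Lb]) = head Lx v); last by clear E; case: v hne {hok hle hA hAB}.
  by rewrite ok_head // andbT (negbTE (ok_last hok hAB)) andbT.
- rewrite !andbF; apply/negbTE; apply/negP => /andP [/eqP ? /eqP ?]; lia.
Qed.


Lemma main_ii (d : nat -> ncpoly) (d1 : peq (d 1) (mono [::]))
  (drec : forall n, 2 <= n -> peq (d n) (d_rec d n)) n : 2 <= n -> forall w,
  coef (pmul (pmul (mono [:: La]) (d n)) (mono [:: Lb])) w = walk_ii n w.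
Proof.
move=> hn w; rewrite /coef pmul_mono_l pmul_mono_r.
case/lastP: w => [|w z].
  rewrite count_nil_map_r /walk_ii /= xpair_eqE.
  by case: eqP => //; lia.
rewrite count_rcons_map; case: w => [|l v].
  rewrite count_nil_map_l muln0 /walk_ii /=.
  by case: z => /=; rewrite xpair_eqE; case: eqP => //=; lia.
rewrite count_cons_map.
have := main_i d1 drec (n:=n) (ltnW hn) v; rewrite /coef => ->.
rewrite rcons_cons walk_ii_eq //.
by case: (z == Lb); case: (l == La); case: (W v); case: (_ == _).
Qed.

Fixpoint g (m : nat) : nat -> nat :=
  match m with
  | 0 => fun _ => 1
  | m'.+1 => fix h r := match r with 0 => 0 | r'.+1 => h r' + g m' r'.+2 end
  end.

Lemma g_S m r : g m.+1 r.+1 = g m.+1 r + g m r.+2. Proof. by []. Qed.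
Lemma g_S0 m : g m.+1 0 = 0. Proof. by []. Qed.
Lemma g_0 r : g 0 r = 1. Proof. by []. Qed.

Lemma g_closed m s : g m.+1 s.+1 + 'C(m.*2 + 2 + s, m) = 'C(m.*2 + 2 + s, m.+1).
Proof.
elim: m s => [|m IHm] s.
  rewrite bin0 bin1; elim: s => [|s IH] //; rewrite g_S g_0; lia.
elim: s => [|s IHs].
  rewrite g_S g_S0 add0n.
  have := IHm 1.
  have -> : m.+1.*2 + 2 + 0 = (m.*2 + 3).+1 by lia.
  have -> : m.*2 + 2 + 1 = m.*2 + 3 by lia.
  rewrite !binS.
  have -> : 'C(m.*2 + 3, m.+2) = 'C(m.*2 + 3, m.+1).
    rewrite -bin_sub; last by lia.
    congr binomial; lia.
  lia.
rewrite g_S.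
have := IHm s.+2.
have -> : m.+1.*2 + 2 + s.+1 = (m.*2 + 4 + s).+1 by lia.
have -> : m.*2 + 2 + s.+2 = m.*2 + 4 + s by lia.
rewrite (_ : m.+1.*2 + 2 + s = m.*2 + 4 + s) in IHs; last by lia.
rewrite !binS; lia.
Qed.

Lemma g_conv n : forall m r, m.*2 + r <= n -> forall s,
  g m (r + s) = \sum_(j < m.+1) g j r * g (m - j) s.
Proof.
elim: n => [|n IH] m r hmr s.
- have -> : r = 0 by lia.
  have -> : m = 0 by lia.
  by rewrite big_ord1.
case: r hmr => [|r] hmr.
  rewrite big_ord_recl /= mul1n subn0 big1 ?addn0 // => j _.
case: m hmr => [|m] hmr.
  by rewrite big_ord1.
rewrite addSn g_S IH; last by lia.
rewrite -addSn -addSn (IH m r.+2); last by lia.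
rewrite big_ord_recl [in RHS]big_ord_recl !g_0 !mul1n !subn0 -addnA; congr (_ + _).
rewrite -big_split; apply: eq_bigr => j _.
have -> : (lift ord0 j : nat) = j.+1 by [].
by rewrite g_S subSS mulnDl.
Qed.

Lemma g_cat m : g m.+1 1 = \sum_(j < m.+1) g j 1 * g (m - j) 1.
Proof. by rewrite g_S g_S0 add0n -[2]/(1+1) (g_conv (n := m.*2 + 1)). Qed.

Lemma g_binom m : g m 1 = 'C(m.*2, m) %/ m.+1.
Proof.
case: m => [|k]; first by rewrite bin0 divn1.
have h1 := g_closed k 0.
have h2 := mul_bin_left (k.+1.*2) k.
rewrite addn0 in h1.
rewrite (_ : k.+1.*2 = k.*2 + 2) in h2 *; last by lia.
rewrite (_ : k.*2 + 2 - k = k.+2) in h2; last by lia.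
move: h1 h2; set c := 'C(_, k.+1); set e := 'C(_, k); move=> h1 h2.
have -> : c = g k.+1 1 * k.+2 by nia.
by rewrite mulnK.
Qed.

Lemma sum_iota a n (F : nat -> nat) : \sum_(k <- iota a n) F k = \sum_(j < n) F (a + j).
Proof.
elim: n a => [|n IH] a; first by rewrite big_nil big_ord0.
rewrite /= big_cons big_ord_recl addn0 IH; congr (_ + _); apply: eq_bigr => j _.
have -> : (lift ord0 j : nat) = j.+1 by [].
by rewrite addnS addSn.
Qed.

Lemma peq_size (p q : ncpoly) : peq p q -> size p = size q.
Proof. by move=> h; apply: perm_size; apply/allP => x _ /=; apply/eqP; exact: h. Qed.

Lemma size_rec (d : nat -> ncpoly) (drec : forall n, 2 <= n -> peq (d n) (d_rec d n)) n :
  2 <= n -> size (d n) = size (d n.-1) + \sum_(k <- iota 2 (n - 2)) size (d (n - k)) * size (d k).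
Proof.
move=> hn; rewrite (peq_size (drec n hn)) /d_rec /padd size_cat size_allpairs /mono /= muln1.
rewrite size_flatten /shape sumnE !big_map; congr (_ + _); apply: eq_bigr => k _.
by rewrite !size_allpairs /= !muln1.
Qed.

Lemma size_g (d : nat -> ncpoly) (d1 : peq (d 1) (mono [::]))
  (drec : forall n, 2 <= n -> peq (d n) (d_rec d n)) m : size (d m.+1) = g m 1.
Proof.
elim/ltn_ind: m => m IH.
case: m IH => [|m] IH; first by rewrite (peq_size d1).
rewrite size_rec // g_cat big_ord_recl g_0 mul1n subn0.
rewrite (IH m) //; congr (_ + _).
rewrite (_ : m.+2 - 2 = m); last by rewrite subSS subSS subn0.
rewrite sum_iota; apply: eq_bigr => -[j hj] _.
change (size (d (m.+2 - (2 + j))) * size (d (2 + j)) = g j.+1 1 * g (m - j.+1) 1).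
have e1 : m.+2 - (2 + j) = (m - j.+1).+1 by clear IH; lia.
have e2 : 2 + j = (j.+1).+1 by clear IH; lia.
have l1 : m - j.+1 < m.+1 by clear IH; lia.
have l2 : j.+1 < m.+1 by clear IH; lia.
rewrite e1 e2 (IH (m - j.+1) l1) (IH j.+1 l2).
by rewrite mulnC.
Qed.


Theorem mainTheorem4 (d : nat -> ncpoly)
  (d1 : peq (d 1) (mono [::]))
  (drec : forall n, 2 <= n -> peq (d n) (d_rec d n)) :
  forall n, 1 <= n ->
    (* (i) *)
    (forall w, coef (d n) w = walksum_coef (walk_i n) w) /\
    (* (ii) *)
    (2 <= n -> forall w,
       coef (pmul (pmul (mono [:: La]) (d n)) (mono [:: Lb])) w
       = walksum_coef (walk_ii n) w) /\
    (* (iii) *)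
    ((forall w, coef (d n) w <= 1) /\
     nmonos (d n) = 'C((n.-1).*2, n.-1) %/ n).
Proof.
move=> n hn.
have Hi : forall w, coef (d n) w = walk_i n w.
  by move=> w; rewrite (main_i d1 drec hn) walk_iE.
split; first by move=> w; rewrite /walksum_coef Hi.
split; first by move=> hn2 w; rewrite /walksum_coef; exact: main_ii.
have Hle : forall w, coef (d n) w <= 1 by move=> w; rewrite Hi leq_b1.
split; first exact: Hle.
rewrite /nmonos undup_id; last first.
  apply: count_mem_uniq => x; have c1 := Hle x; rewrite /coef in c1.
  have := has_count (pred1 x) (d n); rewrite has_pred1 => ->.
  by case: (count_mem x (d n)) c1 => [|[|]].
case: n hn Hi Hle => [|m] // _ _ _.
by rewrite (size_g d1 drec) g_binom.
Qed.
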